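(* For $n\ge0$ and $0\le x<s^n$ with base-$s$ expansion $x=x_0+x_1s+\dots+x_{n-1}s^{n-1}$ ($0\le x_k<s$) put $S_{(n,x)}=S_{x_0}S_{x_1}\cdots S_{x_{n-1}}$ and $u_{(n,x)}=u_{x_0}u_{x_1}\cdots u_{x_{n-1}}$ (empty products equal $I$). Then for all $n,m\ge0$, $0\le x<s^n$, $0\le y<s^m$: if $x=\varphi(j,x')$ and $y=\varphi(l,y')$ for some $(j,x'),(l,y')\in\mathcal V$, then $$T_S(u_{(n,x)}u_{(m,y)}^* )=S_{(n,x)}S_{(m,y)}^*+C_{(n,x),(m,y)},$$ where $C_{(n,x),(m,y)}$ is the rank-one operator with $C_{(n,x),(m,y)}E_{(k,z)}=E_{(j,x')}$ if $(k,z)=(l,y')$ and $C_{(n,x),(m,y)}E_{(k,z)}=0$ otherwise; and if $x$ or $y$ is not in the range of $\varphi$, then $T_S(u_{(n,x)}u_{(m,y)}^* )=S_{(n,x)}S_{(m,y)}^*$.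
   Context: Fix an integer $s\ge2$. Let $\mathcal V=\{(n,x): n\in\mathbb Z_{\ge0},\ x\in\mathbb Z,\ 0\le x<s^n\}$, $H=\ell^2(\mathcal V)$ with orthonormal basis $\{E_{(n,x)}\}$. $S_j$ ($0\le j\le s-1$) are the isometries on $H$ given by $S_jE_{(n,x)}=E_{(n+1,sx+j)}$. On $\ell^2(\mathbb Z)$ with standard basis $\{e_l\}_{l\in\mathbb Z}$, define isometries $u_je_l=e_{sl+j}$, $j=0,\dots,s-1$ (these satisfy the Cuntz relations $u_j^*u_k=\delta_{jk}$, $\sum_ju_ju_j^*=I$). Let $\varphi:\mathcal V\to\mathbb Z$, $\varphi(n,x)=s^n+x$ (injective), let $\iota:H\to\ell^2(\mathbb Z)$ be the isometry $\iota E_{(n,x)}=e_{\varphi(n,x)}$, and define $T_S:B(\ell^2(\mathbb Z))\to B(H)$ by $T_S(a)=\iota^*a\iota$. *)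

(* Defs.v *)
From mathcomp Require Import all_boot all_order all_algebra.
Set Implicit Arguments. Unset Strict Implicit. Unset Printing Implicit Defensive.
Import GRing.Theory Num.Theory.
Local Open Scope ring_scope.

(* Vectors of H = l^2(V) are modelled as coefficient functions on nat*nat
   (index (n,x)); vectors of l^2(Z) as coefficient functions on int.
   Operators are given by their (row- and column-finite) matrix action on
   coefficient functions; an operator identity is checked on the orthonormal
   basis. *)
Section Defs.
Variables (R : nzRingType) (s : nat).

Definition Hvec := nat * nat -> R.
Definition Lvec := int -> R.

Definition inV (p : nat * nat) : bool := (p.2 < s ^ p.1)%N.

Definition EH (w : nat * nat) : Hvec := fun p => if p == w then 1 else 0.
Definition eZ (l : int) : Lvec := fun l' => if l' == l then 1 else 0.

Definition phi (p : nat * nat) : int := ((s ^ p.1)%N + p.2)%N%:Z.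

(* u_j e_l = e_{s l + j}, and its adjoint u_j^* e_{s l + j} = e_l *)
Definition u (j : nat) (f : Lvec) : Lvec :=
  fun l => if (s%:Z %| l - j%:Z)%Z then f ((l - j%:Z) %/ s%:Z)%Z else 0.
Definition u_adj (j : nat) (f : Lvec) : Lvec :=
  fun k => f (s%:Z * k + j%:Z).

(* S_j E_(n,x) = E_(n+1, s x + j), and its adjoint *)
Definition S (j : nat) (f : Hvec) : Hvec :=
  fun p => if (0 < p.1)%N && (p.2 %% s == j)%N then f (p.1.-1, p.2 %/ s)%N else 0.
Definition S_adj (j : nat) (f : Hvec) : Hvec :=
  fun p => f (p.1.+1, s * p.2 + j)%N.

(* iota E_(n,x) = e_{phi(n,x)}; iota^* e_{phi v} = E_v, iota^* e_l = 0 off range *)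
Definition iota_adj (g : Lvec) : Hvec := fun p => if inV p then g (phi p) else 0.

(* T_S(a) E_w = iota^* a iota E_w = iota^* (a e_{phi w}) *)
Definition TS_basis (a : Lvec -> Lvec) (w : nat * nat) : Hvec :=
  iota_adj (a (eZ (phi w))).

Definition digit (x k : nat) : nat := (x %/ s ^ k %% s)%N.

Definition uw (n x : nat) : Lvec -> Lvec :=
  foldr (fun k g => u (digit x k) \o g) id (iota 0 n).
Definition uw_adj (n x : nat) : Lvec -> Lvec :=
  foldr (fun k g => g \o u_adj (digit x k)) id (iota 0 n).
Definition Sw (n x : nat) : Hvec -> Hvec :=
  foldr (fun k g => S (digit x k) \o g) id (iota 0 n).
Definition Sw_adj (n x : nat) : Hvec -> Hvec :=
  foldr (fun k g => g \o S_adj (digit x k)) id (iota 0 n).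

Definition Crank1 (jx ly : nat * nat) (f : Hvec) : Hvec :=
  fun p => if p == jx then f ly else 0.

End Defs.

(* Main.v *)
Require Import Defs.
From mathcomp Require Import all_boot all_order all_algebra.
From mathcomp Require Import zify ring.
From Stdlib Require Import FunctionalExtensionality Classical.
Import GRing.Theory Num.Theory.
Local Open Scope ring_scope.

Lemma modn_split (s N x : nat) : (x %% (s * N) = s * (x %/ s %% N) + x %% s)%N.
Proof.
rewrite [in LHS](divn_eq (x %% (s * N)) s) modn_divl [(N * s)%N]mulnC mulnC.
congr (_ + _)%N.
exact: (modn_dvdm _ (dvdn_mulr N (dvdnn s))).
Qed.

Lemma foldr_iotaS (A : Type) (h : nat -> (A -> A) -> (A -> A)) a m :
  foldr h id (iota a.+1 m) = foldr (fun k => h k.+1) id (iota a m).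
Proof. by elim: m a => [|m IH] a //=; rewrite IH. Qed.

Lemma digitS s x k : digit s x k.+1 = digit s (x %/ s) k.
Proof. by rewrite /digit expnS divnMA. Qed.
Lemma digit0 s x : digit s x 0 = (x %% s)%N.
Proof. by rewrite /digit expn0 divn1. Qed.

Lemma foldr_ext (A : Type) (h1 h2 : nat -> (A -> A) -> (A -> A)) l :
  (forall k g, h1 k g = h2 k g) -> foldr h1 id l = foldr h2 id l.
Proof. by move=> H; elim: l => [|a l IH] //=; rewrite IH H. Qed.

Lemma uwS (R : nzRingType) s n x : @uw R s n.+1 x = @u R s (x %% s) \o @uw R s n (x %/ s).
Proof.
rewrite /uw /= foldr_iotaS digit0 (@foldr_ext _ _ (fun k g => @u R s (digit s (x %/ s) k) \o g)) // => k g.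
by rewrite digitS.
Qed.

Lemma uw_adjS (R : nzRingType) s n x : @uw_adj R s n.+1 x = @uw_adj R s n (x %/ s) \o @u_adj R s (x %% s).
Proof.
rewrite /uw_adj /= foldr_iotaS digit0 (@foldr_ext _ _ (fun k g => g \o @u_adj R s (digit s (x %/ s) k))) // => k g.
by rewrite digitS.
Qed.

Lemma SwS (R : nzRingType) s n x : @Sw R s n.+1 x = @S R s (x %% s) \o @Sw R s n (x %/ s).
Proof.
rewrite /Sw /= foldr_iotaS digit0 (@foldr_ext _ _ (fun k g => @S R s (digit s (x %/ s) k) \o g)) // => k g.
by rewrite digitS.
Qed.

Lemma Sw_adjS (R : nzRingType) s n x : @Sw_adj R s n.+1 x = @Sw_adj R s n (x %/ s) \o @S_adj R s (x %% s).
Proof.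
rewrite /Sw_adj /= foldr_iotaS digit0 (@foldr_ext _ _ (fun k g => g \o @S_adj R s (digit s (x %/ s) k))) // => k g.
by rewrite digitS.
Qed.

Lemma u_eZ (R : nzRingType) s j l : (0 < s)%N ->
  @u R s j (eZ R l) = eZ R (s%:Z * l + j%:Z).
Proof.
move=> s0; apply: functional_extensionality => l'; rewrite /u /eZ.
have sn0 : s%:Z != 0 by rewrite eqz_nat -lt0n.
have [->|ne] := eqVneq l' (s%:Z * l + j%:Z).
  by rewrite addrK dvdz_mulr ?dvdzz // (mulKz l sn0) eqxx.
case: ifP => // hd; case: ifP => // /eqP he.
by case/eqP: ne; rewrite -[l'](subrK j%:Z) -(divzK hd) he mulrC.
Qed.

Lemma uw_eZ (R : nzRingType) s n x l : (0 < s)%N ->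
  @uw R s n x (eZ R l) = eZ R ((s ^ n)%N%:Z * l + (x %% s ^ n)%N%:Z).
Proof.
move=> s0; elim: n x l => [|n IH] x l.
  by rewrite expn0 modn1 mul1r addr0.
rewrite uwS /= IH u_eZ // expnS modn_split PoszD !PoszM; congr (eZ R _); ring.
Qed.

Lemma uw_0 (R : nzRingType) s n x : @uw R s n x (fun _ => 0) = (fun _ => 0).
Proof.
elim: n x => [|n IH] x //; rewrite uwS /= IH.
by apply: functional_extensionality => l; rewrite /u; case: ifP.
Qed.

Lemma uw_adj_eq (R : nzRingType) s m y g q :
  @uw_adj R s m y g q = g ((s ^ m)%N%:Z * q + (y %% s ^ m)%N%:Z).
Proof.
elim: m y g q => [|m IH] y g q.
  by rewrite expn0 modn1 mul1r addr0.
rewrite uw_adjS /= IH /u_adj expnS modn_split PoszD !PoszM; congr g; ring.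
Qed.

Lemma S_EH (R : nzRingType) s j w : (j < s)%N ->
  @S R s j (EH R w) = EH R (w.1.+1, s * w.2 + j)%N.
Proof.
move=> js; apply: functional_extensionality => [[a b]]; case: w => c d.
rewrite /S /EH /=.
have s0 : (0 < s)%N by apply: leq_ltn_trans js.
case: a => [|a] /=; first by [].
rewrite !xpair_eqE eqSS.
have [->|ne] := eqVneq b (s * d + j)%N.
  by rewrite mulnC modnMDl modn_small // divnMDl // divn_small // addn0 !eqxx !andbT.
rewrite andbF; case: ifP => // /eqP h1; case: ifP => // /andP [_ /eqP h2].
by case/eqP: ne; rewrite (divn_eq b s) h1 h2 mulnC.
Qed.

Lemma Sw_EH (R : nzRingType) s n x w : (0 < s)%N ->
  @Sw R s n x (EH R w) = EH R (w.1 + n, s ^ n * w.2 + x %% s ^ n)%N.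
Proof.
move=> s0; elim: n x w => [|n IH] x w.
  by rewrite expn0 modn1 mul1n addn0 addn0; case: w.
rewrite SwS /= IH S_EH ?ltn_pmod //= expnS modn_split addnS.
congr (EH R (_, _)); ring.
Qed.

Lemma Sw_0 (R : nzRingType) s n x : @Sw R s n x (fun _ => 0) = (fun _ => 0).
Proof.
elim: n x => [|n IH] x //; rewrite SwS /= IH.
by apply: functional_extensionality => l; rewrite /S; case: ifP.
Qed.

Lemma Sw_adj_eq (R : nzRingType) s m y f p :
  @Sw_adj R s m y f p = f (p.1 + m, s ^ m * p.2 + y %% s ^ m)%N.
Proof.
elim: m y f p => [|m IH] y f p.
  by rewrite expn0 modn1 mul1n !addn0; case: p.
rewrite Sw_adjS /= IH /S_adj expnS modn_split /= addnS.
congr f; congr (_, _); ring.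
Qed.

Lemma phi_lt s a b c : (2 <= s)%N -> (b < s ^ a)%N -> (a < c)%N -> (s ^ a + b < s ^ c)%N.
Proof.
move=> hs hb hac.
have h1 : (s ^ a + b < 2 * s ^ a)%N by lia.
have h2 : (2 * s ^ a <= s ^ a.+1)%N by rewrite expnS leq_mul2r hs orbT.
have h3 : (s ^ a.+1 <= s ^ c)%N by rewrite leq_pexp2l //; lia.
lia.
Qed.

Lemma phi_inj s a b c d : (2 <= s)%N -> (b < s ^ a)%N -> (d < s ^ c)%N ->
  (s ^ a + b = s ^ c + d)%N -> a = c /\ b = d.
Proof.
move=> hs hb hd e.
case: (ltngtP a c) => hac.
- by have := @phi_lt _ _ _ _ hs hb hac; lia.
- by have := @phi_lt _ _ _ _ hs hd hac; lia.
- by subst; split => //; lia.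
Qed.

Lemma q0_zero s m y k z q0 : (2 <= s)%N -> (y < s ^ m)%N -> (z < s ^ k)%N ->
  (s ^ m * q0 + y = s ^ k + z)%N ->
  ~ (exists a b, ((a + m)%N, (s ^ m * b + y)%N) = (k, z)) -> q0 = 0%N.
Proof.
move=> hs hy hz hq nEP; case: (posnP q0) => // q0p; exfalso; apply: nEP.
have mk : (m <= k)%N.
  rewrite leqNgt; apply/negP => km.
  have := @phi_lt _ _ _ _ hs hz km.
  have : (s ^ m <= s ^ m * q0)%N by rewrite leq_pmulr.
  lia.
set a := (k - m)%N.
have ka : k = (a + m)%N by rewrite subnK.
have eK : (s ^ k = s ^ a * s ^ m)%N by rewrite ka expnD.
have aq : (s ^ a <= q0)%N.
  rewrite leqNgt; apply/negP => qa.
  have : (s ^ m * q0.+1 <= s ^ m * s ^ a)%N by rewrite leq_mul2l qa orbT.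
  rewrite mulnS; lia.
exists a, (q0 - s ^ a)%N; rewrite -ka; congr (_, _).
have : (s ^ m * q0 = s ^ m * (q0 - s ^ a) + s ^ m * s ^ a)%N by rewrite -mulnDr subnK.
lia.
Qed.

Lemma master (R : nzRingType) s (hs : (2 <= s)%N) n x m y (hx : (x < s ^ n)%N) (hy : (y < s ^ m)%N)
  k z (hz : (z < s ^ k)%N) p :
  @TS_basis R s (@uw R s n x \o @uw_adj R s m y) (k, z) p =
  @Sw R s n x (@Sw_adj R s m y (@EH R (k, z))) p +
  (if inV s p && (phi s p == x%:Z) && (y == s ^ k + z)%N then 1 else 0).
Proof.
have s0 : (0 < s)%N by lia.
have M0 : (0 < s ^ m)%N by rewrite expn_gt0 s0.
have UA : @uw_adj R s m y (eZ R (phi s (k, z))) =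
    (fun q => if (s ^ m)%N%:Z * q + y%:Z == (s ^ k + z)%N%:Z then 1 else 0).
  by apply: functional_extensionality => q; rewrite uw_adj_eq modn_small.
have SA : @Sw_adj R s m y (EH R (k, z)) =
    (fun p' => if ((p'.1 + m)%N, (s ^ m * p'.2 + y)%N) == (k, z) then 1 else 0).
  by apply: functional_extensionality => q; rewrite Sw_adj_eq modn_small.
rewrite /TS_basis /iota_adj /= UA SA.
case: (classic (exists q0, (s ^ m * q0 + y = s ^ k + z)%N)) => [[q0 hq]|nEQ].
- have UA' : (fun q => if (s ^ m)%N%:Z * q + y%:Z == (s ^ k + z)%N%:Z then 1 else 0)
      = eZ R q0%:Z.
    apply: functional_extensionality => q; rewrite /eZ -hq PoszD PoszM.
    congr (if _ then _ else _); apply/eqP/eqP => [h|->] //.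
    apply: (mulfI (x := (s ^ m)%N%:Z)); first by rewrite eqz_nat -lt0n.
    exact: (addIr y%:Z).
  rewrite UA' uw_eZ // (modn_small hx) /eZ -PoszM -PoszD.
  case: (classic (exists a b, ((a + m)%N, (s ^ m * b + y)%N) = (k, z))) => [[a [b [ek ez]]]|nEP].
  + subst k z.
    have eq0 : q0 = (s ^ a + b)%N.
      have := eqn_mul2l (s ^ m) q0 (s ^ a + b).
      rewrite (_ : (s ^ m == 0)%N = false) /=; last by lia.
      move=> h; apply/eqP; rewrite -h; apply/eqP; move: hq; rewrite expnD; lia.
    have SA' : (fun p' : nat * nat => if ((p'.1 + m)%N, (s ^ m * p'.2 + y)%N) == ((a + m)%N, (s ^ m * b + y)%N) then (1 : R) else 0)
        = EH R (a, b).
      apply: functional_extensionality => [[c d]]; rewrite /EH /= !xpair_eqE eqn_add2r eqn_add2r eqn_mul2l.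
      by rewrite (_ : (s ^ m == 0)%N = false) //; lia.
    rewrite SA' Sw_EH //= (modn_small hx).
    have -> : (y == s ^ (a + m) + (s ^ m * b + y))%N = false.
      apply/negP => /eqP; have : (0 < s ^ (a + m))%N by rewrite expn_gt0 s0. lia.
    rewrite andbF addr0 /EH eq0.
    have hb : (b < s ^ a)%N.
      move: hz; rewrite expnD mulnC => hz.
      rewrite -(ltn_pmul2l M0); lia.
    have hb2 : (s ^ n * b + x < s ^ (a + n))%N.
      have : (s ^ n * b.+1 <= s ^ n * s ^ a)%N by rewrite leq_mul2l hb orbT.
      rewrite expnD mulnS; lia.
    have e2 : (s ^ n * (s ^ a + b) + x = s ^ (a + n) + (s ^ n * b + x))%N.
      rewrite expnD mulnDr; lia.
    case: p => c d; rewrite /inV /phi /= e2 eqz_nat.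
    case: ifP => hd.
      congr (if _ then _ else _); apply/eqP/eqP => [e|[-> ->]] //.
      by case: (@phi_inj _ _ _ _ _ hs hd hb2 e) => -> ->.
    case: eqP => // [[ec ed]]; subst; by rewrite hb2 in hd.
  + have q00 := @q0_zero _ _ _ _ _ _ hs hy hz hq nEP; subst q0.
    have SA' : (fun p' : nat * nat => if ((p'.1 + m)%N, (s ^ m * p'.2 + y)%N) == (k, z) then (1 : R) else 0)
        = (fun _ => 0).
      apply: functional_extensionality => [[c d]]; case: eqP => // e.
      by case: nEP; exists c, d.
    rewrite SA' Sw_0 add0r muln0 add0n.
    move: hq; rewrite muln0 add0n => ->; rewrite eqxx andbT.
    by case: ifP.
- have UA' : (fun q => if (s ^ m)%N%:Z * q + y%:Z == (s ^ k + z)%N%:Z then (1 : R) else 0)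
      = (fun _ => 0).
    apply: functional_extensionality => q; case: ifP => // /eqP e; exfalso.
    case: q e => q e.
      by apply: nEQ; exists q; apply/eqP; rewrite -eqz_nat PoszD PoszM e.
    move: e; rewrite NegzE mulrN -PoszM.
    have : (s ^ m <= s ^ m * q.+1)%N by rewrite leq_pmulr.
    lia.
  have SA' : (fun p' : nat * nat => if ((p'.1 + m)%N, (s ^ m * p'.2 + y)%N) == (k, z) then (1 : R) else 0)
      = (fun _ => 0).
    apply: functional_extensionality => [[c d]]; case: eqP => // [[ek ez]].
    exfalso; apply: nEQ; exists (s ^ c + d)%N; rewrite -ek -ez expnD; lia.
  rewrite UA' SA' uw_0 Sw_0 add0r.
  have -> : (y == s ^ k + z)%N = false.
    by apply/negP => /eqP e; apply: nEQ; exists 0%N; rewrite muln0 add0n.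
  by rewrite andbF; case: ifP.
Qed.

Theorem proposition6p4 (R : nzRingType) (s : nat) (hs : (2 <= s)%N)
    (n x m y : nat) (hx : (x < s ^ n)%N) (hy : (y < s ^ m)%N) :
  (forall j x' l y' : nat,
     inV s (j, x') -> inV s (l, y') ->
     x%:Z = phi s (j, x') -> y%:Z = phi s (l, y') ->
     forall w, inV s w ->
       @TS_basis R s (@uw R s n x \o @uw_adj R s m y) w
       = (fun p => @Sw R s n x (@Sw_adj R s m y (@EH R w)) p
                   + @Crank1 R (j, x') (l, y') (@EH R w) p))
  /\
  ((~ (exists v, inV s v /\ phi s v = x%:Z)
    \/ ~ (exists v, inV s v /\ phi s v = y%:Z)) ->
     forall w, inV s w ->
       @TS_basis R s (@uw R s n x \o @uw_adj R s m y) w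
       = @Sw R s n x (@Sw_adj R s m y (@EH R w))).
Proof.
split.
- move=> j x' l y' hj hl ex ey [k z] hw; apply: functional_extensionality => p.
  rewrite master //; congr (_ + _).
  rewrite /Crank1 /EH.
  have ex' : x = (s ^ j + x')%N by apply/eqP; rewrite -eqz_nat ex.
  have ey' : y = (s ^ l + y')%N by apply/eqP; rewrite -eqz_nat ey.
  have E1 : (inV s p && (phi s p == x%:Z)) = (p == (j, x')).
    case: p => c d; rewrite /inV /phi /= eqz_nat ex'.
    apply/andP/eqP => [[hd /eqP e]|e]; last by case: e => -> ->; split.
    by case: (@phi_inj s c d j x' hs hd hj e) => -> ->.
  have E2 : (y == s ^ k + z)%N = ((l, y') == (k, z)).
    rewrite ey'; apply/eqP/eqP => [e|e]; last by case: e => -> ->.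
    by case: (@phi_inj s l y' k z hs hl hw e) => -> ->.
  by rewrite E1 E2; case: (p == (j, x')); case: ((l, y') == (k, z)).
- move=> H [k z] hw; apply: functional_extensionality => p.
  rewrite master //.
  have -> : inV s p && (phi s p == x%:Z) && (y == s ^ k + z)%N = false.
    apply/negP => /andP [/andP [hp /eqP e1] /eqP e2].
    case: H => H; apply: H.
      by exists p.
    by exists (k, z); split => //; rewrite e2.
  by rewrite addr0.
Qed.
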